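(* For any rooted binary tree $T$ with $n$ leaves, the height of the modified centroid decomposition satisfies $h(\mathit{MCD}(T))\le 2+2\log_2 n$.
   Context: A rooted binary tree is one in which every internal node has exactly two children, a left and a right child. A component of $T$ is a connected set of nodes of $T$, and $|C|$ denotes the number of nodes of a component $C$. An edge of $T$ crosses the boundary of $C$ if exactly one of its endpoints lies in $C$. It is an edge from below if its endpoint in $C$ is the parent endpoint. A centroid of a component $C$ is a node $u\in C$ such that every connected component of $C\setminus\{u\}$ has at most $|C|/2$ nodes. Removing a node $s$ from $C$ leaves at most three connected components: $C_l$ containing the left child of $s$, $C_r$ containing the right child of $s$, and $C_p$ containing the parent of $s$, each intersected with $C$ and possibly empty. The modified centroid decomposition $\mathit{MCD}(T)$ is a ternary tree built recursively, starting from the component $C=T$. For the current component $C$ a splitting node $s$ is chosen. If $C$ has no edge from below, $s$ is a centroid $c$ of $C$. Otherwise $C$ has exactly one edge $(x,y)$ from below with $x\in C$; let $c$ be a centroid of $C$, and let $s$ be the lowest common ancestor of $x$ and $c$. The node of $\mathit{MCD}(T)$ for $C$ stores $s$. Its children are the nodes of $\mathit{MCD}(T)$ for the nonempty components among $C_l,C_r,C_p$ obtained by removing $s$ from $C$. Every component arising this way has at most one edge from below and at most one edge from above. The height $h(\mathit{MCD}(T))$ is the height of this ternary tree. *)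

(* Defs.v *)
From mathcomp Require Import all_boot.
Set Implicit Arguments.
Unset Strict Implicit.
Unset Printing Implicit Defensive.

Inductive btree : Type := Leaf | Node of btree & btree.

Fixpoint leaves (t : btree) : nat :=
  match t with Leaf => 1 | Node l r => leaves l + leaves r end.

(** Nodes are addressed by their path from the root
    (false = left child, true = right child); the child of p in
    direction b is rcons p b. *)
Fixpoint nodes (t : btree) : seq (seq bool) :=
  match t with
  | Leaf => [:: [::]]
  | Node l r => [::] :: map (cons false) (nodes l) ++ map (cons true) (nodes r)
  end.

Definition node (T : btree) := seq_sub (nodes T).

Section Tree.
Variable T : btree.

Definition is_child (p : node T) (b : bool) (c : node T) : bool :=
  val c == rcons (val p) b.

Definition parent_of (p c : node T) : bool := is_child p false c || is_child p true c.

Definition tedge (x y : node T) : bool := parent_of x y || parent_of y x.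

Definition restr (D : {set node T}) : rel (node T) :=
  [rel x y | [&& x \in D, y \in D & tedge x y]].

Definition connected (C : {set node T}) : bool :=
  [forall x in C, forall y in C, connect (restr C) x y].

(** the connected component of D containing v (empty if v is not in D) *)
Definition comp (D : {set node T}) (v : node T) : {set node T} :=
  [set w | (v \in D) && connect (restr D) v w].

Definition centroid (C : {set node T}) (u : node T) : bool :=
  (u \in C) && [forall v in C :\ u, 2 * #|comp (C :\ u) v| <= #|C|].

Definition anc (a x : node T) : bool := prefix (val a) (val x).

Definition is_lca (s x y : node T) : bool :=
  [&& anc s x, anc s y & [forall a, (anc a x && anc a y) ==> anc a s]].

(** x is the endpoint in C of an edge (x, y) from below: y is a child of x
    not lying in C *)
Definition from_below (C : {set node T}) (x : node T) : bool :=
  (x \in C) && [exists y, parent_of x y && (y \notin C)].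

Definition split_ok (C : {set node T}) (s : node T) : Prop :=
  exists c, centroid C c /\
    ((forall x, ~~ from_below C x) /\ s = c
     \/ exists x, from_below C x /\ is_lca s x c).

Definition Cl (C : {set node T}) (s : node T) : {set node T} :=
  [set w | [exists v, is_child s false v && (w \in comp (C :\ s) v)]].
Definition Cr (C : {set node T}) (s : node T) : {set node T} :=
  [set w | [exists v, is_child s true v && (w \in comp (C :\ s) v)]].
Definition Cp (C : {set node T}) (s : node T) : {set node T} :=
  [set w | [exists v, parent_of v s && (w \in comp (C :\ s) v)]].

End Tree.

Inductive ttree (A : Type) : Type :=
  TN : A -> option (ttree A) -> option (ttree A) -> option (ttree A) -> ttree A.

(** height = number of edges on a longest root-to-leaf path *)
Fixpoint theight (A : Type) (t : ttree A) : nat :=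
  match t with
  | TN _ a b c =>
    let f o := match o with None => 0 | Some t' => (theight t').+1 end in
    maxn (f a) (maxn (f b) (f c))
  end.

(** t is a valid modified centroid decomposition of the component C of T
    (for some admissible choices of centroids). *)
Fixpoint is_mcd (T : btree) (C : {set node T}) (t : ttree (node T)) {struct t} : Prop :=
  match t with
  | TN s a b c =>
    split_ok C s /\
    match a with None => Cl C s = set0 | Some ta => Cl C s != set0 /\ is_mcd (Cl C s) ta end /\
    match b with None => Cr C s = set0 | Some tb => Cr C s != set0 /\ is_mcd (Cr C s) tb end /\
    match c with None => Cp C s = set0 | Some tc => Cp C s != set0 /\ is_mcd (Cp C s) tc end
  end.

From Stdlib Require Import Reals.

Definition log2R (x : R) : R := (ln x / ln 2)%R.

(* Main.v *)
Require Import Defs.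
From mathcomp Require Import all_boot.
From Stdlib Require Import Reals.
From Stdlib Require Import Lra.
From mathcomp Require Import ssrnat zify.
Require Import Defs.

Set Implicit Arguments.
Unset Strict Implicit.
Unset Printing Implicit Defensive.

Lemma prefix_rconsE (s t : seq bool) b :
  prefix s (rcons t b) -> s = rcons t b \/ prefix s t.
Proof.
elim: t s => [|a t IH] [|x s] /=; try by right.
- by move=> /andP[/eqP-> hs]; left; case: s hs.
- move=> /andP[/eqP-> /IH[->|h]]; [by left | by right; rewrite /= eqxx h].
Qed.

Lemma connect_inv (X : finType) (e : rel X) (Q : X -> Prop) v w :
  Q v -> (forall x y, connect e v x -> Q x -> e x y -> Q y) -> connect e v w -> Q w.
Proof.
move=> Qv step /connectP [p pth ->].
have gen : forall p x, connect e v x -> Q x -> path e x p -> Q (last x p).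
  elim=> [|y q IH] x cx Qx //= /andP[exy pq].
  apply: IH pq; first exact: connect_trans cx (connect1 exy).
  exact: step exy.
exact: gen (connect0 _ _) Qv pth.
Qed.

Lemma tedgeP (T : btree) (x y : node T) :
  tedge x y -> (exists b, val y = rcons (val x) b) \/ (exists b, val x = rcons (val y) b).
Proof.
rewrite /tedge /parent_of /is_child.
by case/orP=> /orP[]/eqP h; [left; exists false|left; exists true|right; exists false|right; exists true].
Qed.

Lemma comp_sub (T : btree) (D : {set node T}) v w : w \in comp D v -> w \in D.
Proof.
rewrite inE => /andP[vD]; apply: (@connect_inv _ _ (fun u => u \in D)) vD _ => x y _ _.
by case/and3P.
Qed.

Lemma comp_self (T : btree) (D : {set node T}) v : (v \in comp D v) = (v \in D).
Proof. by rewrite inE connect0 andbT. Qed.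

Lemma comp_step (T : btree) (D : {set node T}) v z y :
  z \in comp D v -> y \in D -> tedge z y -> y \in comp D v.
Proof.
move=> hz yD ezy; have zD := comp_sub hz.
move: hz; rewrite !inE => /andP[vD cz]; rewrite vD /=.
apply: connect_trans cz (connect1 _); by rewrite /restr /= zD yD.
Qed.

Lemma comp_child_desc (T : btree) (D : {set node T}) (s v w : node T) b :
  is_child s b v -> w \in comp (D :\ s) v -> anc v w.
Proof.
move=> /eqP hv; rewrite inE => /andP[_].
apply: (@connect_inv _ _ (fun u => anc v u)) (prefix_refl _) _ => x y _ hx /and3P[_ /setD1P[ys _] /tedgeP[[b' hy]|[b' hx']]].
- by rewrite /anc hy; apply: prefix_trans hx (prefix_rcons _ _).
- move: hx; rewrite /anc hx' => /prefix_rconsE[|//].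
  rewrite hv => /rcons_inj [] /val_inj hys _.
  by rewrite hys eqxx in ys.
Qed.

Lemma comp_par_ndesc (T : btree) (D : {set node T}) (s v w : node T) :
  parent_of v s -> w \in comp (D :\ s) v -> ~~ anc s w.
Proof.
move=> hv; rewrite inE => /andP[_].
have [b hs] : exists b, val s = rcons (val v) b.
  by case/orP: hv => /eqP h; eexists; exact: h.
apply: (@connect_inv _ _ (fun u => ~~ anc s u)).
  rewrite /anc hs; apply/negP=> /size_prefix; rewrite size_rcons; lia.
move=> x y _ hx /and3P[_ /setD1P[ys _] /tedgeP[[b' hy]|[b' hx']]].
- apply/negP; rewrite /anc hy => /prefix_rconsE[h|h].
    by move: ys; rewrite (val_inj (esym (etrans hy (esym h)))) eqxx.
  by rewrite /anc h in hx.
- apply/negP=> h; move: hx; rewrite /anc hx' (prefix_trans h (prefix_rcons _ _)) //.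
Qed.

Lemma comp_mono (T : btree) (D D' : {set node T}) v :
  v \in D' -> {subset comp D v <= D'} -> {subset comp D v <= comp D' v}.
Proof.
move=> vD' sub w hw; have := hw; rewrite inE => /andP[vD cw].
rewrite inE vD' /=; move: cw.
apply: (@connect_inv _ _ (fun u => connect (restr D') v u)) (connect0 _ _) _ => x y cx hx exy.
apply: connect_trans hx (connect1 _).
have xin : x \in comp D v by rewrite inE vD cx.
have yin : y \in comp D v by rewrite inE vD (connect_trans cx (connect1 exy)).
case/and3P: exy => _ _ ete.
by rewrite /restr /= (sub _ xin) (sub _ yin).
Qed.

Definition nofb (T : btree) (C : {set node T}) := forall x, ~~ from_below C x.
Definition Inv (T : btree) (C : {set node T}) :=
  C != set0 /\ forall x z, from_below C x -> from_below C z -> x = z.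

Lemma parentE (T : btree) (v s : node T) : parent_of v s -> exists b, val s = rcons (val v) b.
Proof. by case/orP=> /eqP h; eexists; exact: h. Qed.

Lemma parent_uniq (T : btree) (v1 v2 s : node T) :
  parent_of v1 s -> parent_of v2 s -> v1 = v2.
Proof.
move=> /parentE[b1 e1] /parentE[b2 e2]; apply: val_inj.
by rewrite e1 in e2; case: (rcons_inj e2).
Qed.

Lemma child_anc_par (T : btree) (s v z : node T) b :
  is_child s b v -> anc v z -> parent_of z s -> False.
Proof.
move=> /eqP hv avz /parentE[b' hs]; move: avz; rewrite /anc hv hs => /size_prefix.
rewrite !size_rcons; lia.
Qed.

Lemma child_anc_anc (T : btree) (s v : node T) b :
  is_child s b v -> anc v s -> False.
Proof.
move=> /eqP hv; rewrite /anc hv => /size_prefix; rewrite size_rcons; lia.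
Qed.

Lemma fb_piece (T : btree) (C : {set node T}) s v b z :
  (is_child s b v \/ parent_of v s) -> from_below (comp (C :\ s) v) z ->
  from_below C z \/ (parent_of z s /\ parent_of v s).
Proof.
move=> hR /andP[zP /existsP[y /andP[pzy yP]]].
have zC : z \in C by have := comp_sub zP; rewrite in_setD1 => /andP[].
case: (boolP (y \in C)) => yC; last first.
  by left; rewrite /from_below zC; apply/existsP; exists y; rewrite pzy.
case: (eqVneq y s) => [eys|nys].
- subst y; case: hR => [hc|hp]; last by right.
  by exfalso; exact: child_anc_par hc (comp_child_desc hc zP) pzy.
- by rewrite (comp_step zP _ _) in yP; [|rewrite in_setD1 nys yC|rewrite /tedge pzy].
Qed.

Lemma piece_good (T : btree) (C : {set node T}) s v b :
  Inv C -> split_ok C s -> (is_child s b v \/ parent_of v s) -> comp (C :\ s) v != set0 ->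
  Inv (comp (C :\ s) v) /\
  (2 * #|comp (C :\ s) v| <= #|C| \/
   ((exists x, from_below C x) /\ nofb (comp (C :\ s) v) /\ #|comp (C :\ s) v| <= #|C|)).
Proof.
move=> [_ uC] [c [/andP[cC /forallP cent] hcase]] hR ne.
set P := comp (C :\ s) v.
have vP : v \in P.
  by case/set0Pn: ne => w; rewrite /P inE => /andP[vD _]; rewrite comp_self.
have PC : {subset P <= C} by move=> w /comp_sub; rewrite in_setD1 => /andP[].
have K' : forall z, from_below P z ->
    (parent_of v s /\ parent_of z s) \/ (~~ parent_of v s /\ from_below C z).
  move=> z fzP; have zP : z \in P by case/andP: fzP.
  case: (fb_piece hR fzP) => [fz|[pz pv]]; last by left.
  case: hcase => [[nf _]|[x [fx lx]]]; first by move: (nf z); rewrite fz.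
  right; split => //; apply/negP => pv.
  have ezx := uC _ _ fz fx; subst z.
  case/and3P: lx => asx _ _.
  by rewrite (negbTE (comp_par_ndesc pv zP)) in asx.
split.
  split => //.
  move=> z1 z2 /K'[[pv p1]|[npv f1]] /K'[[pv2 p2]|[npv2 f2]].
  - exact: parent_uniq p1 p2.
  - by rewrite pv in npv2.
  - by rewrite pv2 in npv.
  - exact: uC.
case: hcase => [[nf eqsc]|[x [fx lx]]].
  left; subst s.
  have vCc : v \in C :\ c by apply: comp_sub vP.
  exact: (implyP (cent v)) vCc.
case: (boolP (c \in P)) => cP.
  right; split; first by exists x.
  split; last by apply: subset_leq_card; apply/subsetP.
  move=> z; apply/negP => fzP.
  case: (K' z fzP) => [[pv _]|[npv fz]].
    case/and3P: lx => _ asc _.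
    by rewrite (negbTE (comp_par_ndesc pv cP)) in asc.
  have ezx := uC _ _ fz fx; subst z.
  have xP : x \in P by case/andP: fzP.
  have hc : is_child s b v by case: hR => // pv; rewrite pv in npv.
  case/and3P: lx => _ _ /forallP /(_ v) /implyP.
  rewrite (comp_child_desc hc xP) (comp_child_desc hc cP) => /(_ isT) avs.
  by exfalso; exact: child_anc_anc hc avs.
left.
have vCc : v \in C :\ c.
  rewrite in_setD1 (PC _ vP) andbT; apply/eqP => evc; move: cP; rewrite -evc vP.
  by [].
have sub : {subset P <= comp (C :\ c) v}.
  apply: comp_mono vCc _ => w wP; rewrite in_setD1 (PC _ wP) andbT.
  by apply/eqP => ewc; move: cP; rewrite -ewc wP.
apply: leq_trans ((implyP (cent v)) vCc).
by rewrite leq_mul2l; apply/orP; right; apply: subset_leq_card; apply/subsetP.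
Qed.

Lemma pieceE (T : btree) (D : {set node T}) (R : pred (node T)) :
  (forall v1 v2, R v1 -> R v2 -> v1 = v2) ->
  [set w | [exists v, R v && (w \in comp D v)]] != set0 ->
  exists2 v, R v & [set w | [exists v, R v && (w \in comp D v)]] = comp D v.
Proof.
move=> uR /set0Pn[w]; rewrite inE => /existsP[v /andP[Rv _]].
exists v => //; apply/setP => u; rewrite inE.
apply/existsP/idP => [[v' /andP[Rv' hu]]|hu]; first by rewrite -(uR _ _ Rv' Rv).
by exists v; rewrite Rv.
Qed.

Definition oh (A : Type) (o : option (ttree A)) :=
  match o with None => 0 | Some t' => (theight t').+1 end.

Lemma main_bound (T : btree) k : forall (t : ttree (node T)) (C : {set node T}),
  theight t < k -> Inv C -> is_mcd C t ->
  (nofb C -> 2 ^ theight t <= #|C| ^ 2) /\ 2 ^ theight t <= 2 * #|C| ^ 2.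
Proof.
elim: k => [//|k IH] [s a b c] C ht hinv [hs [ha [hb hc]]].
have Cpos : 0 < #|C| by rewrite card_gt0; case: hinv.
have ch : forall (o : option (ttree (node T))) (P : {set node T}),
    (P != set0 -> exists v bb, (is_child s bb v \/ parent_of v s) /\ P = comp (C :\ s) v) ->
    oh o <= k ->
    match o with None => P = set0 | Some t' => P != set0 /\ is_mcd P t' end ->
    (nofb C -> 2 ^ oh o <= #|C| ^ 2) /\ 2 ^ oh o <= 2 * #|C| ^ 2.
  case=> [t'|] P hP /=; last first.
    move=> _ _; have C2 : 0 < #|C| ^ 2 by rewrite expn_gt0 Cpos.
    by split => [_|]; rewrite expn0 // muln_gt0 C2.
  move=> hk [ne hm].
  have [v [bb [hR eP]]] := hP ne; rewrite eP in ne hm.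
  have [hinvP hsz] := piece_good hinv hs hR ne.
  have [IH1 IH2] := IH t' _ hk hinvP hm.
  rewrite expnS.
  move: IH1 IH2 hsz; set p := #|_|; set m := #|C|; set E := 2 ^ theight t'.
  move=> IH1 IH2 [hsz|[[x fx] [nfP hsz]]].
    split => [_|]; nia.
  split => [nf|]; first by move: (nf x); rewrite fx.
  have := IH1 nfP; nia.
have ht' : theight (TN s a b c) = maxn (oh a) (maxn (oh b) (oh c)) by [].
move: ht; rewrite ht' ltnS !geq_max => /and3P[ka kb kc].
have uc : forall v1 v2, is_child s false v1 -> is_child s false v2 -> v1 = v2.
  by move=> v1 v2 /eqP e1 /eqP e2; apply: val_inj; rewrite e1 e2.
have uc' : forall v1 v2, is_child s true v1 -> is_child s true v2 -> v1 = v2.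
  by move=> v1 v2 /eqP e1 /eqP e2; apply: val_inj; rewrite e1 e2.
have up : forall v1 v2, parent_of v1 s -> parent_of v2 s -> v1 = v2.
  by move=> v1 v2; apply: parent_uniq.
have [a1 a2] := ch a (Cl C s) (fun ne => let: ex_intro2 v Rv e := pieceE uc ne in
     ex_intro _ v (ex_intro _ false (conj (or_introl Rv) e))) ka ha.
have [b1 b2] := ch b (Cr C s) (fun ne => let: ex_intro2 v Rv e := pieceE uc' ne in
     ex_intro _ v (ex_intro _ true (conj (or_introl Rv) e))) kb hb.
have [c1 c2] := ch c (Cp C s) (fun ne => let: ex_intro2 v Rv e :=
     @pieceE _ _ (fun v => parent_of v s) up ne in
     ex_intro _ v (ex_intro _ false (conj (or_intror Rv) e))) kc hc.
have mx : forall m n X, 2 ^ m <= X -> 2 ^ n <= X -> 2 ^ maxn m n <= X.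
  by move=> m n X; rewrite /maxn; case: ifP.
split => [nf|]; (apply: (mx); [|apply: (mx)]); auto.
Qed.

Lemma size_nodes (T : btree) : size (nodes T) < 2 * leaves T.
Proof.
elim: T => [//|l IHl r IHr] /=; rewrite size_cat !size_map; lia.
Qed.

Lemma leaves_gt0 (T : btree) : 0 < leaves T.
Proof. elim: T => [//|l IHl r IHr] /=; lia. Qed.

Lemma card_node (T : btree) : #|{: node T}| <= size (nodes T).
Proof.
rewrite cardE -(size_map val); apply: uniq_leq_size.
  by rewrite (map_inj_uniq val_inj) enum_uniq.
by move=> x /mapP[y _ ->]; exact: (valP y).
Qed.

Lemma INR_exp2 h : INR (2 ^ h) = (pow 2 h).
Proof.
elim: h => [|h IH]; first by rewrite expn0.
rewrite expnS mult_INR IH /=; lra.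
Qed.

Theorem lemma2 (T : btree) (t : ttree (node T)) :
  is_mcd [set: node T] t ->
  (INR (theight t) <= 2 + 2 * log2R (INR (leaves T)))%R.
Proof.
move=> hm.
have h0 : [::] \in nodes T by case: T t hm.
pose x0 : node T := Sub [::] h0.
have nfT : nofb [set: node T].
  by move=> x; apply/negP => /andP[_ /existsP[y /andP[_]]]; rewrite inE.
have invT : Inv [set: node T].
  split; first by apply/set0Pn; exists x0; rewrite inE.
  by move=> x z fx; move: (nfT x); rewrite fx.
have [H _] := main_bound (ltnSn (theight t)) invT hm.
have := H nfT; rewrite cardsT => Hb.
set n := leaves T; set h := theight t.
have Hn : #|{: node T}| < 2 * n := leq_ltn_trans (card_node T) (size_nodes T).
have npos : 0 < n := leaves_gt0 T.
have H2 : 2 ^ h <= 4 * (n * n).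
  apply: leq_trans Hb _; rewrite -mulnn.
  move: (leq_mul (ltnW Hn) (ltnW Hn)); rewrite mulnACA (_ : 2 * 2 = 4) //.
have HR : (pow 2 h <= 4 * (INR n * INR n))%R.
  rewrite -INR_exp2.
  have -> : (4 * (INR n * INR n))%R = INR (4 * (n * n)) by rewrite !mult_INR /=; lra.
  by apply: le_INR; apply/leP.
have nR : (0 < INR n)%R by apply: lt_0_INR; apply/ltP.
have l2 : (0 < ln 2)%R by have := ln_lt_2; lra.
have hl : (INR h * ln 2 <= 2 * ln 2 + 2 * ln (INR n))%R.
  rewrite -ln_pow; last lra.
  have -> : (2 * ln 2 + 2 * ln (INR n) = ln (4 * (INR n * INR n)))%R.
    rewrite ln_mult; last (apply: Rmult_lt_0_compat => //); last lra.
    rewrite ln_mult // (_ : 4 = 2 * 2)%R; last lra.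
    rewrite ln_mult; lra.
  have p2 : (0 < pow 2 h)%R by apply: pow_lt; lra.
  case: (Rle_lt_or_eq_dec _ _ HR) => [lt|->]; last lra.
  by apply: Rlt_le; apply: ln_increasing.
rewrite /log2R.
apply: (Rmult_le_reg_r (ln 2)) => //.
have -> : ((2 + 2 * (ln (INR n) / ln 2)) * ln 2 = 2 * ln 2 + 2 * ln (INR n))%R.
  by field; lra.
exact: hl.
Qed.
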